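(* Fix integers $P>1$ and $N\ge 1$, and set $L=N+P-1$. For $\mathbf{b}=[b_1,\dots,b_N]^T\in\{\pm1\}^N$ let $\mathbf{B}$ be the $L\times P$ matrix whose $j$th column ($1\le j\le P$) is $[\underbrace{0,\dots,0}_{j-1},b_1,\dots,b_N,\underbrace{0,\dots,0}_{P-j}]^T$. For $\mathbf{c}=(c_1,\dots,c_{P-1})\in\{\pm1\}^{P-1}$ let $\mathbf{G}(\mathbf{c})$ be the symmetric $P\times P$ Toeplitz matrix with all diagonal entries equal to $N$ and $(i,j)$ entry $c_{|i-j|}$ for $i\ne j$. For a prefix $\mathbf{b}_{(\ell)}=[b_1,\dots,b_\ell]\in\{\pm1\}^\ell$ ($1\le\ell\le N$), let $\mathcal{A}(\mathbf{b}_{(\ell)}\mid\mathbf{G}(\mathbf{c}))$ be the set of all $\mathbf{b}'\in\{\pm1\}^N$ whose first $\ell$ entries equal $b_1,\dots,b_\ell$ and whose associated matrix $\mathbf{B}'$ satisfies $\mathbf{B}'^T\mathbf{B}'=\mathbf{G}(\mathbf{c})$. For an integer $k\ge 0$, an integer vector $\mathbf{q}=(q_1,\dots,q_{P-1})\in\mathbb{Z}^{P-1}$ and $d_{2-P},\dots,d_0\in\{-1,0,1\}$, let $A_k(\mathbf{q}\mid d_{2-P},\dots,d_0)$ be the number of $(d_1,\dots,d_k)\in\{\pm1\}^k$ such that $q_j=\sum_{i=1}^k d_{i-j}d_i$ for all $1\le j\le P-1$ (for $k=0$ this equals $1$ if $\mathbf{q}=\mathbf{0}$ and $0$ otherwise).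 Let $\mathbf{m}_\ell=(m_\ell^{(1)},\dots,m_\ell^{(P-1)})$ with $m_\ell^{(j)}=(b_1b_{j+1}+b_2b_{j+2}+\cdots+b_{\ell-j}b_\ell)\cdot\mathbf{1}\{\ell>j\}$, and use the convention $b_i=0$ for $i\le 0$. Then for $\ell=1,2,\dots,N$, $$|\mathcal{A}(\mathbf{b}_{(\ell)}\mid\mathbf{G}(\mathbf{c}))|=A_{N-\ell}\big(\mathbf{c}-\mathbf{m}_\ell\,\big|\,b_{\ell-P+2},\dots,b_\ell\big).$$
   Context: $\mathbf{1}\{\cdot\}$ denotes the indicator function. $\mathbf{B}$ is the convolution matrix of the codeword for a channel of memory order $P-1$; the diagonal entries of $\mathbf{B}^T\mathbf{B}$ all equal $N$ and its $(i,j)$ entry is the aperiodic autocorrelation $\sum_t b_tb_{t+|i-j|}$. *)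

(* Defs.v *)
From mathcomp Require Import all_boot all_order all_algebra.
Set Implicit Arguments. Unset Strict Implicit. Unset Printing Implicit Defensive.
Import Order.TTheory GRing.Theory Num.Theory.
Local Open Scope ring_scope.

(* A sign vector in {+-1}^n is encoded as a finite function 'I_n -> bool,
   true |-> +1, false |-> -1. *)
Definition sgnb (x : bool) : int := if x then 1 else -1.

Definition sgnseq (n : nat) (x : {ffun 'I_n -> bool}) : seq int :=
  [seq sgnb (x i) | i <- enum 'I_n].

(* The L x P convolution matrix B, L = N + P - 1 (0-indexed):
   B i j = b_{i-j+1} (1-indexed b) if 0 <= i - j < N, else 0. *)
Definition convmx (N P : nat) (b : {ffun 'I_N -> bool}) : 'M[int]_(N + P - 1, P) :=
  \matrix_(i < N + P - 1, j < P)
    if (j <= i)%N && (i - j < N)%N then nth 0 (sgnseq b) (i - j) else 0.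

Definition Gmx (N P : nat) (c : {ffun 'I_(P - 1) -> bool}) : 'M[int]_P :=
  \matrix_(i < P, j < P)
    if i == j then (N%:Z) else nth 0 (sgnseq c) ((maxn i j - minn i j).-1).

Definition Aset (N P : nat) (l : nat) (b : {ffun 'I_N -> bool})
    (c : {ffun 'I_(P - 1) -> bool}) : {set {ffun 'I_N -> bool}} :=
  [set b' : {ffun 'I_N -> bool} |
     [forall i : 'I_N, (i < l)%N ==> (b' i == b i)] &&
     ((convmx P b')^T *m convmx P b' == Gmx N c)].

(* A_k(q | d_{2-P},...,d_0): dpre t = d_{t+2-P} for t = 0..P-2, q j = q_{j+1}.
   The extended sequence s has s_t = d_{t+2-P}, so d_n = s_{n+P-2}. *)
Definition Acount (P k : nat) (q : 'I_(P - 1) -> int) (dpre : 'I_(P - 1) -> int) : nat :=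
  #|[set d : {ffun 'I_k -> bool} |
     let s := [seq dpre t | t <- enum 'I_(P - 1)] ++ sgnseq d in
     [forall j : 'I_(P - 1),
        q j == \sum_(i < k) nth 0 s (i + P - 2 - j) * nth 0 s (i + P - 1)]]|.

(* m_l^{(j)} for j = j'+1 *)
Definition mvec (N P l : nat) (b : {ffun 'I_N -> bool}) (j : 'I_(P - 1)) : int :=
  if (j.+1 < l)%N then
    \sum_(i < l - j.+1) nth 0 (sgnseq b) i * nth 0 (sgnseq b) (i + j.+1)
  else 0.

(* b_n with convention b_n = 0 for n <= 0; bwin t = b_{l-P+2+t}, t = 0..P-2 *)
Definition bwin (N P l : nat) (b : {ffun 'I_N -> bool}) (t : 'I_(P - 1)) : int :=
  if (P - 2 < l + t)%N then nth 0 (sgnseq b) (l + t + 1 - P) else 0.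

(* Main.v *)
Require Import Defs.
From mathcomp Require Import all_boot all_order all_algebra.
From mathcomp Require Import zify.
Import Order.TTheory GRing.Theory Num.Theory.
Local Open Scope ring_scope.

Lemma nth_map_enum {T : Type} (x0 : T) {n} (f : 'I_n -> T) {m} (h : (m < n)%N) :
  nth x0 [seq f i | i <- enum 'I_n] m = f (Ordinal h).
Proof.
rewrite (nth_map (Ordinal h)) ?size_enum_ord //; congr f; apply: val_inj => /=.
exact: nth_enum_ord.
Qed.

Lemma nth_map_enum_ge (T : Type) (x0 : T) n (f : 'I_n -> T) m :
  (n <= m)%N -> nth x0 [seq f i | i <- enum 'I_n] m = x0.
Proof. by move=> h; rewrite nth_default // size_map size_enum_ord. Qed.

Definition bt {n} (x : {ffun 'I_n -> bool}) m : int := nth 0 (sgnseq x) m.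

Lemma bt_ge n (x : {ffun 'I_n -> bool}) m : (n <= m)%N -> bt x m = 0.
Proof. by move=> h; rewrite /bt /sgnseq nth_map_enum_ge. Qed.

Lemma convmxE N P (x : {ffun 'I_N -> bool}) i j :
  convmx P x i j = if (j <= i)%N then bt x (i - j) else 0.
Proof.
rewrite mxE /bt; case: (j <= i)%N => //=; case: ltnP => // h.
by rewrite /sgnseq nth_map_enum_ge.
Qed.

Lemma gramE N P (x : {ffun 'I_N -> bool}) (j j' : 'I_P) : (j <= j')%N ->
  ((convmx P x)^T *m convmx P x) j j' = \sum_(u < N) bt x u * bt x (u + (j' - j)).
Proof.
move=> hjj; rewrite mxE.
under eq_bigr => i _ do rewrite mxE !convmxE.
rewrite -(big_mkord xpredT (fun i => (if (j <= i)%N then bt x (i - j) else 0) *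
   (if (j' <= i)%N then bt x (i - j') else 0))).
have hj' := ltn_ord j'.
rewrite (big_cat_nat _ (n:=j')) //=; last by lia.
rewrite big_nat_cond big1 ?add0r; last first.
  by move=> i /andP[/andP[_ hi] _]; rewrite [(j' <= i)%N]leqNgt hi /= mulr0.
rewrite (eq_big_nat _ _ (F2 := fun i => bt x (i - j) * bt x (i - j'))); last first.
  by move=> i /andP[h1 h2]; rewrite h1 (leq_trans hjj h1).
rewrite -{1}(add0n j') big_addn.
rewrite (big_cat_nat _ (n:=N)) //=; last by lia.
rewrite [X in _ + X]big_nat_cond [X in _ + X]big1 ?addr0; last first.
  by move=> i /andP[/andP[hi _] _]; rewrite addnK [bt x i]bt_ge // mulr0.
rewrite big_mkord; apply: eq_bigr => i _.
by rewrite addnK mulrC addnBA.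
Qed.

Lemma sgnb_sq (a : bool) : sgnb a * sgnb a = 1.
Proof. by case: a. Qed.

Lemma btE {n} (x : {ffun 'I_n -> bool}) {m} (h : (m < n)%N) : bt x m = sgnb (x (Ordinal h)).
Proof. by rewrite /bt /sgnseq (nth_map_enum _ _ h). Qed.

Lemma nth_sgnseq {n} (x : {ffun 'I_n -> bool}) (k : 'I_n) : nth 0 (sgnseq x) k = sgnb (x k).
Proof.
rewrite /sgnseq (nth_map_enum _ _ (ltn_ord k)); congr (sgnb (x _)); exact: val_inj.
Qed.

Lemma gram_eq N P (hN : (1 <= N)%N) (x : {ffun 'I_N -> bool}) (c : {ffun 'I_(P - 1) -> bool}) :
  ((convmx P x)^T *m convmx P x == Gmx N c) =
  [forall k : 'I_(P - 1), \sum_(u < N) bt x u * bt x (u + k.+1) == sgnb (c k)].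
Proof.
apply/eqP/forallP.
- move=> E k; have hk : (k.+1 < P)%N by have := ltn_ord k; lia.
  have h0 : (0 < P)%N by lia.
  have := congr1 (fun M : 'M[int]_P => M (Ordinal h0) (Ordinal hk)) E => /=.
  rewrite gramE //= subn0 => ->; rewrite mxE /=.
  by rewrite nth_sgnseq eqxx.
- move=> H; apply/matrixP => j j'.
  wlog h : j j' / (j <= j')%N.
    move=> W; case: (leqP j j') => hjj; first exact: W.
    have := W j' j (ltnW hjj).
    have sym : ((convmx P x)^T *m convmx P x)^T = (convmx P x)^T *m convmx P x.
      by rewrite trmx_mul trmxK.
    rewrite -{1}sym mxE => ->; rewrite !mxE eq_sym maxnC minnC //.
  rewrite gramE // mxE; case: eqVneq => [->|hne].
    rewrite subnn; under eq_bigr => u _ do rewrite addn0 (btE x (ltn_ord u)) sgnb_sq.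
    by rewrite sumr_const card_ord natz.
  have hlt : (j < j')%N by rewrite ltn_neqAle h andbT.
  have hk : (j' - j - 1 < P - 1)%N by have := ltn_ord j'; have := ltn_ord j; lia.
  have := eqP (H (Ordinal hk)) => /=.
  rewrite (_ : ((j' - j - 1).+1 = j' - j)%N); last by lia.
  move=> ->.
  rewrite (_ : ((maxn j j' - minn j j').-1 = j' - j - 1)%N); last by lia.
  by rewrite (nth_sgnseq c (Ordinal hk)).
Qed.

Definition ext {N l} (b : {ffun 'I_N -> bool}) (d : {ffun 'I_(N - l) -> bool}) : {ffun 'I_N -> bool} :=
  [ffun i : 'I_N => if (i < l)%N then b i else nth false [seq d k | k <- enum 'I_(N - l)] (i - l)].
Definition tl {N} l (x : {ffun 'I_N -> bool}) : {ffun 'I_(N - l) -> bool} :=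
  [ffun k : 'I_(N - l) => nth false [seq x i | i <- enum 'I_N] (k + l)].

Lemma bt_ext N l (b : {ffun 'I_N -> bool}) (d : {ffun 'I_(N - l) -> bool}) (hl : (l <= N)%N) n :
  bt (ext b d) n = if (n < l)%N then bt b n else bt d (n - l).
Proof.
case: (ltnP n N) => hn.
  rewrite (btE _ hn) ffunE /=; case: ifP => hnl; first by rewrite (btE b hn).
  have hk : (n - l < N - l)%N by move/negbT: hnl; lia.
  by rewrite (btE d hk) (nth_map_enum _ _ hk).
by rewrite bt_ge //; case: ifP => h; rewrite bt_ge //; move/negbT: h; lia.
Qed.

Lemma tl_ext N l (b : {ffun 'I_N -> bool}) (d : {ffun 'I_(N - l) -> bool}) : tl l (ext b d) = d.
Proof.
apply/ffunP => k; rewrite ffunE.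
have hk : (k + l < N)%N by have := ltn_ord k; lia.
rewrite (nth_map_enum _ _ hk) ffunE /= ifF; last by lia.
have hk' : (k + l - l < N - l)%N by have := ltn_ord k; lia.
rewrite (nth_map_enum _ _ hk'); congr (d _); apply: val_inj => /=; lia.
Qed.

Lemma ext_tl N l (b x : {ffun 'I_N -> bool}) :
  (forall i : 'I_N, (i < l)%N -> x i = b i) -> ext b (tl l x) = x.
Proof.
move=> hpre; apply/ffunP => i; rewrite ffunE; case: ifP => hi; first by rewrite hpre.
have hk : (i - l < N - l)%N by have := ltn_ord i; move/negbT: hi; lia.
rewrite (nth_map_enum _ _ hk) ffunE.
have hk' : (i - l + l < N)%N by have := ltn_ord i; move/negbT: hi; lia.
rewrite (nth_map_enum _ _ hk'); congr (x _); apply: val_inj => /=; move/negbT: hi; lia.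
Qed.

Lemma ac_shift N (y : {ffun 'I_N -> bool}) K :
  \sum_(u < N) bt y u * bt y (u + K) =
  \sum_(0 <= v < N) (if (K <= v)%N then bt y (v - K) * bt y v else 0).
Proof.
transitivity (\sum_(0 <= v < N + K) (if (K <= v)%N then bt y (v - K) * bt y v else 0)); last first.
  rewrite (big_cat_nat _ (n := N)) //=; last by lia.
  rewrite [X in _ + X]big_nat_cond [X in _ + X]big1 ?addr0 //.
  move=> v /andP[/andP[hv _] _]; case: ifP => // _; rewrite [bt y v]bt_ge ?mulr0 //.
rewrite (big_cat_nat _ (n := K)) //=; last by lia.
rewrite [X in _ = X + _]big_nat_cond [X in _ = X + _]big1 ?add0r; last first.
  by move=> v /andP[/andP[_ hv] _]; rewrite leqNgt hv.
rewrite (big_addn 0 _ K) addnK big_mkord; apply: eq_bigr => i _.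
by rewrite leq_addl addnK.
Qed.

Lemma key P N l (hP : (1 < P)%N) (hlN : (l <= N)%N) (b : {ffun 'I_N -> bool})
   (d : {ffun 'I_(N - l) -> bool}) (k : 'I_(P - 1)) :
  \sum_(u < N) bt (ext b d) u * bt (ext b d) (u + k.+1) =
  @mvec N P l b k + \sum_(i < N - l)
     nth 0 ([seq @bwin N P l b t | t <- enum 'I_(P - 1)] ++ sgnseq d) (i + P - 2 - k) *
     nth 0 ([seq @bwin N P l b t | t <- enum 'I_(P - 1)] ++ sgnseq d) (i + P - 1).
Proof.
have hk := ltn_ord k.
rewrite ac_shift (big_cat_nat _ (n := l)) //=.
congr (_ + _).
  rewrite /mvec; case: ltnP => hK.
    rewrite (big_cat_nat _ (n := k.+1)) //=; last by lia.
    rewrite [X in X + _]big_nat_cond [X in X + _]big1 ?add0r; last first.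
      by move=> v /andP[/andP[_ hv] _]; rewrite leqNgt hv.
    rewrite (big_addn 0 _ k.+1) big_mkord; apply: eq_bigr => i _.
    have hi := ltn_ord i.
    rewrite leq_addl addnK !bt_ext //.
    have h1 : (i < l)%N by lia.
    have h2 : (i + k.+1 < l)%N by lia.
    by rewrite h1 h2.
  rewrite big_nat_cond big1 //.
  move=> v /andP[/andP[_ hv] _]; rewrite ifF //; lia.
rewrite (big_addn 0 _ l) big_mkord; apply: eq_bigr => i _.
have hi := ltn_ord i.
rewrite !nth_cat size_map size_enum_ord.
have h3 : (i + P - 1 < P - 1)%N = false by lia.
rewrite h3 (_ : (i + P - 1 - (P - 1) = i)%N); last by lia.
rewrite !bt_ext //.
have h8 : (i + l < l)%N = false by lia.
rewrite h8 addnK.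
case: (ltnP i k.+1) => hik.
  have h4 : (i + P - 2 - k < P - 1)%N by lia.
  rewrite h4 (nth_map_enum _ _ h4) /bwin /=.
  case: (leqP k.+1 (i + l)) => h5.
    have h6 : (P - 2 < l + (i + P - 2 - k))%N by lia.
    have h7 : (i + l - k.+1 < l)%N by lia.
    rewrite h6 h7 (_ : (l + (i + P - 2 - k) + 1 - P = i + l - k.+1)%N) //; lia.
  have h6 : (P - 2 < l + (i + P - 2 - k))%N = false by lia.
  by rewrite h6 mul0r.
have h4 : (i + P - 2 - k < P - 1)%N = false by lia.
have h5 : (k.+1 <= i + l)%N by lia.
have h7 : (i + l - k.+1 < l)%N = false by lia.
rewrite h4 h5 h7 (_ : (i + l - k.+1 - l = i + P - 2 - k - (P - 1))%N) //; lia.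
Qed.

Theorem lemma4 (P N : nat) (hP : (1 < P)%N) (hN : (1 <= N)%N)
    (b : {ffun 'I_N -> bool}) (c : {ffun 'I_(P - 1) -> bool})
    (l : nat) (hl1 : (1 <= l)%N) (hlN : (l <= N)%N) :
  #|@Aset N P l b c| =
  @Acount P (N - l) (fun j => sgnb (c j) - @mvec N P l b j) (@bwin N P l b).
Proof.
have inj : injective (@ext N l b) by apply: (can_inj (@tl_ext N l b)).
rewrite /Acount -(card_imset _ inj); apply: eq_card => x.
rewrite [in LHS]inE.
case hpre: [forall i : 'I_N, (i < l)%N ==> (x i == b i)]; last first.
  symmetry; apply/imsetP => -[d _ hxd]; move: hpre; rewrite hxd.
  suff -> : [forall i : 'I_N, (i < l)%N ==> (ext b d i == b i)] by [].
  by apply/forallP => i; apply/implyP => hi; rewrite ffunE hi.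
have hx : x = ext b (tl l x).
  by rewrite ext_tl // => i hi; move/forallP: hpre => /(_ i); rewrite hi => /eqP.
rewrite /= hx mem_imset // inE /= gram_eq //.
apply: eq_forallb => k.
by rewrite key // eq_sym addrC subr_eq.
Qed.
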